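(* Let $t_1=t_2$ be a 2-discerning equation and let $T$ be a monoidal monad on $\mathbf{Set}$. Then $T$ is relevant if and only if $T$ preserves $t_1=t_2$.
   Context: An equation $t_1=t_2$ over variables $x_1,\dots,x_n$ is 2-discerning if: every variable occurs in both $t_1$ and $t_2$; $x_1$ is the only variable occurring more than once, occurring exactly once in one side, say $t_1$, and exactly twice in the other side $t_2$, and all other variables occur exactly once on each side; and, letting $s_2$ be the term obtained from $t_2$ by renaming one of the two occurrences of $x_1$ to a fresh variable $x_1'$ (so that $t_2=s_2[x_1/x_1']$) and $s_2'$ the term obtained from $s_2$ by swapping $x_1$ and $x_1'$, the linear equation $s_2=s_2'$ is not derivable in equational logic from $t_1=t_2$. A monoidal monad on $\mathbf{Set}$ has natural $\psi_{X,Y}\colon TX\times TY\to T(X\times Y)$ making $T$ lax monoidal with $\psi^0=\eta_1$ and $\eta,\mu$ monoidal; $\psi^n$ is its $n$-ary version. The lifting $\widehat T\mathcal A$ of a $\Sigma$-algebra on $A$ has carrier $TA$ and operations $T\sigma_{\mathcal A}\circ\psi^{\mathrm{ar}(\sigma)}$; $T$ preserves an equation if $\widehat T\mathcal A$ satisfies it whenever $\mathcal A$ does. $T$ is relevant if $\psi_{A,B}\circ\langle T\pi_1,T\pi_2\rangle=\mathrm{id}_{T(A\times B)}$ for all $A,B$. *)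

(* Defs.v *)
From mathcomp Require Import all_boot.
Set Implicit Arguments. Unset Strict Implicit. Unset Printing Implicit Defensive.

Record signature := Signature { op : Type; ar : op -> nat }.

Inductive term (S : signature) (V : Type) : Type :=
| Var : V -> term S V
| App : forall o : op S, ('I_(ar o) -> term S V) -> term S V.
Arguments Var {S V} _.
Arguments App {S V} o _.

Fixpoint occ (S : signature) (V : eqType) (x : V) (t : term S V) : nat :=
  match t with
  | Var v => (v == x) : nat
  | App o a => \sum_(i < ar o) occ x (a i)
  end.

Fixpoint rename (S : signature) (V W : Type) (f : V -> W) (t : term S V) : term S W :=
  match t with
  | Var v => Var (f v)
  | App o a => App o (fun i => rename f (a i))
  end.

Fixpoint subst (S : signature) (V W : Type) (s : V -> term S W) (t : term S V) : term S W :=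
  match t with
  | Var v => s v
  | App o a => App o (fun i => subst s (a i))
  end.

Inductive derives (S : signature) (l r : term S nat) (W : Type)
  : term S W -> term S W -> Prop :=
| der_ax : forall s : nat -> term S W, derives l r (subst s l) (subst s r)
| der_refl : forall u, derives l r u u
| der_sym : forall u v, derives l r u v -> derives l r v u
| der_trans : forall u v w, derives l r u v -> derives l r v w -> derives l r u w
| der_cong : forall (o : op S) (a b : 'I_(ar o) -> term S W),
    (forall i, derives l r (a i) (b i)) -> derives l r (App o a) (App o b)
| der_subst : forall (s : W -> term S W) u v,
    derives l r u v -> derives l r (subst s u) (subst s v).

(* swap of x (= Some x) and the fresh variable x' (= None) *)
Definition swap_fresh (x : nat) (o : option nat) : option nat :=
  match o with
  | None => Some x
  | Some v => if v == x then None else Some v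
  end.

(* The fresh variable x' is [None]
   in [term S (option nat)]; s2 ranges over the terms obtained from t2 by
   renaming one of the two occurrences of x to x'. *)
Definition two_discerning (S : signature) (t1 t2 : term S nat) (x : nat) : Prop :=
  [/\ occ x t1 = 1,
      occ x t2 = 2,
      (forall v, v <> x -> occ v t1 = occ v t2 /\ occ v t1 <= 1) &
      (forall s2 : term S (option nat),
          rename (odflt x) s2 = t2 -> occ None s2 = 1 ->
          ~ derives t1 t2 s2 (rename (swap_fresh x) s2))].

Definition algebra (S : signature) (A : Type) := forall o : op S, ('I_(ar o) -> A) -> A.

Fixpoint eval (S : signature) (A V : Type) (alg : algebra S A) (rho : V -> A)
  (t : term S V) : A :=
  match t with
  | Var v => rho v
  | App o a => alg o (fun i => eval alg rho (a i))
  end.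

Definition satisfies (S : signature) (A : Type) (alg : algebra S A)
  (t1 t2 : term S nat) : Prop :=
  forall rho : nat -> A, eval alg rho t1 = eval alg rho t2.

Record monoidal_monad := MonoidalMonad {
  T : Type -> Type;
  fmap : forall A B : Type, (A -> B) -> T A -> T B;
  ret : forall A : Type, A -> T A;
  join : forall A : Type, T (T A) -> T A;
  psi : forall A B : Type, T A -> T B -> T (A * B);
  fmap_id : forall A (m : T A), fmap id m = m;
  fmap_comp : forall A B C (f : A -> B) (g : B -> C) (m : T A),
      fmap (g \o f) m = fmap g (fmap f m);
  ret_nat : forall A B (f : A -> B) (a : A), fmap f (ret a) = ret (f a);
  join_nat : forall A B (f : A -> B) (m : T (T A)),
      fmap f (join m) = join (fmap (fmap f) m);
  psi_nat : forall A A' B B' (f : A -> A') (g : B -> B') (a : T A) (b : T B),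
      psi (fmap f a) (fmap g b) = fmap (fun p => (f p.1, g p.2)) (psi a b);
  join_ret : forall A (m : T A), join (ret m) = m;
  join_fmap_ret : forall A (m : T A), join (fmap (@ret A) m) = m;
  join_join : forall A (m : T (T (T A))), join (join m) = join (fmap (@join A) m);
  (* lax monoidal structure, with psi^0 = ret tt *)
  psi_assoc : forall A B C (a : T A) (b : T B) (c : T C),
      fmap (fun p => (p.1.1, (p.1.2, p.2))) (psi (psi a b) c) = psi a (psi b c);
  psi_unitl : forall B (b : T B), fmap snd (psi (ret tt) b) = b;
  psi_unitr : forall A (a : T A), fmap fst (psi a (ret tt)) = a;
  ret_monoidal : forall A B (a : A) (b : B), psi (ret a) (ret b) = ret (a, b);
  join_monoidal : forall A B (m : T (T A)) (n : T (T B)),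
      join (fmap (fun p => psi p.1 p.2) (psi m n)) = psi (join m) (join n)
}.
Arguments fmap {_ A B} _ _.
Arguments ret {_ A} _.
Arguments join {_ A} _.
Arguments psi {_ A B} _ _.

Definition nil_fun (X : Type) : 'I_0 -> X.
Proof. by case. Defined.

Definition cons_fun (X : Type) (n : nat) (x : X) (f : 'I_n -> X) : 'I_n.+1 -> X :=
  fun i => match unlift ord0 i with Some j => f j | None => x end.

Fixpoint psin (M : monoidal_monad) (X : Type) (n : nat)
  : ('I_n -> T M X) -> T M ('I_n -> X) :=
  match n return ('I_n -> T M X) -> T M ('I_n -> X) with
  | 0 => fun _ => ret (nil_fun X)
  | n'.+1 => fun f =>
      fmap (fun p => cons_fun p.1 p.2) (psi (f ord0) (psin (fun i => f (lift ord0 i))))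
  end.

Definition lift_alg (M : monoidal_monad) (S : signature) (A : Type)
  (alg : algebra S A) : algebra S (T M A) :=
  fun o f => fmap (alg o) (psin f).

Definition preserves (M : monoidal_monad) (S : signature) (t1 t2 : term S nat) : Prop :=
  forall (A : Type) (alg : algebra S A),
    satisfies alg t1 t2 -> satisfies (@lift_alg M S A alg) t1 t2.

Definition relevant (M : monoidal_monad) : Prop :=
  forall (A B : Type) (p : T M (A * B)), psi (fmap fst p) (fmap snd p) = p.

(* Main.v *)
Require Import Defs.
From mathcomp Require Import all_boot.
From Stdlib Require Import FunctionalExtensionality PropExtensionality ProofIrrelevance ClassicalEpsilon ClassicalDescription Classical.
Set Implicit Arguments. Unset Strict Implicit. Unset Printing Implicit Defensive.


Definition bind (M : monoidal_monad) (A B : Type) (m : T M A) (f : A -> T M B) : T M B :=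
  join (fmap f m).
Arguments bind {M A B} m f.

Lemma bind_retl (M : monoidal_monad) A B (a : A) (f : A -> T M B) : bind (ret a) f = f a.
Proof. by rewrite /bind ret_nat join_ret. Qed.

Lemma bind_retr (M : monoidal_monad) A (m : T M A) : bind m (fun a => ret a) = m.
Proof. exact: join_fmap_ret. Qed.

Lemma bind_assoc (M : monoidal_monad) A B C (m : T M A) (f : A -> T M B) (g : B -> T M C) :
  bind (bind m f) g = bind m (fun a => bind (f a) g).
Proof. by rewrite /bind join_nat join_join -!fmap_comp. Qed.

Lemma fmap_bindE (M : monoidal_monad) A B (f : A -> B) (m : T M A) :
  fmap f m = bind m (fun a => ret (f a)).
Proof.
rewrite /bind; have -> : (fun a => ret (f a)) = (@ret M B) \o f by [].
by rewrite fmap_comp join_fmap_ret.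
Qed.

Lemma bind_ext (M : monoidal_monad) A B (m : T M A) (f g : A -> T M B) :
  (forall a, f a = g a) -> bind m f = bind m g.
Proof. by move=> H; rewrite (functional_extensionality _ _ H). Qed.

Lemma psi_retr (M : monoidal_monad) A B (m : T M A) (b : B) :
  psi m (ret b) = fmap (fun a => (a, b)) m.
Proof.
have := psi_nat id (fun _ : unit => b) m (ret tt).
rewrite fmap_id ret_nat => ->.
transitivity (fmap (fun a => (a, b)) (fmap fst (psi m (ret tt)))); last by rewrite psi_unitr.
by rewrite -fmap_comp.
Qed.

Lemma psi_retl (M : monoidal_monad) A B (a : A) (n : T M B) :
  psi (ret a) n = fmap (fun b => (a, b)) n.
Proof.
have := psi_nat (fun _ : unit => a) id (ret tt) n.
rewrite fmap_id ret_nat => ->.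
transitivity (fmap (fun b => (a, b)) (fmap snd (psi (ret tt) n))); last by rewrite psi_unitl.
by rewrite -fmap_comp.
Qed.

Lemma K1 (M : monoidal_monad) A B (m : T M A) (n : T M B) :
  psi m n = bind m (fun a => bind n (fun b => ret (a, b))).
Proof.
have := join_monoidal (fmap (@ret M A) m) (ret n).
rewrite join_fmap_ret join_ret => <-.
rewrite psi_retr -fmap_comp /bind -fmap_comp.
congr (join (fmap _ m)); apply: functional_extensionality => a /=.
by rewrite psi_retl fmap_bindE.
Qed.

Lemma K2 (M : monoidal_monad) A B (m : T M A) (n : T M B) :
  psi m n = bind n (fun b => bind m (fun a => ret (a, b))).
Proof.
have := join_monoidal (ret m) (fmap (@ret M B) n).
rewrite join_fmap_ret join_ret => <-.
rewrite psi_retl -fmap_comp /bind -fmap_comp.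
congr (join (fmap _ n)); apply: functional_extensionality => b /=.
by rewrite psi_retr fmap_bindE.
Qed.

Lemma bind_psi (M : monoidal_monad) A B C (m : T M A) (n : T M B) (g : A * B -> T M C) :
  bind (psi m n) g = bind m (fun a => bind n (fun b => g (a, b))).
Proof.
rewrite K1 bind_assoc; apply: bind_ext => a.
by rewrite bind_assoc; apply: bind_ext => b; rewrite bind_retl.
Qed.

Lemma bind_comm (M : monoidal_monad) A B C (m : T M A) (n : T M B) (f : A -> B -> T M C) :
  bind m (fun a => bind n (fun b => f a b)) = bind n (fun b => bind m (fun a => f a b)).
Proof.
have E1 := bind_psi m n (fun p => f p.1 p.2).
rewrite K2 bind_assoc in E1; rewrite -E1 /=.
apply: bind_ext => b; rewrite bind_assoc; apply: bind_ext => a.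
by rewrite bind_retl.
Qed.


Lemma psinS (M : monoidal_monad) X n (F : 'I_n.+1 -> T M X) :
  psin F = bind (F ord0) (fun a => bind (psin (fun i => F (lift ord0 i)))
                                        (fun f => ret (cons_fun a f))).
Proof.
rewrite /= fmap_bindE bind_psi; apply: bind_ext => a; by apply: bind_ext.
Qed.

Lemma cons_funE X n (y : 'I_n.+1 -> X) : cons_fun (y ord0) (fun i => y (lift ord0 i)) = y.
Proof.
apply: functional_extensionality => i; rewrite /cons_fun.
by case: unliftP => [j ->|->].
Qed.

Lemma psin_ret (M : monoidal_monad) X n (y : 'I_n -> X) :
  psin (fun i => ret (y i)) = ret y :> T M _.
Proof.
elim: n y => [|n IH] y.
  by congr ret; apply: functional_extensionality; case.
rewrite psinS bind_retl IH bind_retl; by rewrite cons_funE.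
Qed.

Definition updF (X : Type) n (F : 'I_n -> X) (j : 'I_n) (z : X) : 'I_n -> X :=
  fun i => if i == j then z else F i.

Lemma psin_pull (M : monoidal_monad) X n (F : 'I_n -> T M X) (j : 'I_n) :
  psin F = bind (F j) (fun z => psin (updF F j (ret z))).
Proof.
elim: n F j => [|n IH] F j; first by case: j.
rewrite psinS.
case: (unliftP ord0 j) => [j' ->|->].
- rewrite (IH _ j').
  transitivity (bind (F ord0) (fun a => bind (F (lift ord0 j')) (fun z =>
     bind (psin (updF (fun i => F (lift ord0 i)) j' (ret z))) (fun f => ret (cons_fun a f))))).
    by apply: bind_ext => a; rewrite bind_assoc.
  rewrite bind_comm; apply: bind_ext => z.
  rewrite psinS.
  have -> : updF F (lift ord0 j') (ret z) ord0 = F ord0.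
    by rewrite /updF (negbTE (neq_lift ord0 j')).
  apply: bind_ext => a; congr (bind (psin _) _).
- apply: bind_ext => z; rewrite psinS /updF eqxx bind_retl.
  by congr (bind (psin _) _).
Qed.


Lemma sum_pos n (E : 'I_n -> nat) : (0 < \sum_(i < n) E i) <-> exists i, 0 < E i.
Proof.
rewrite lt0n sum_nat_eq0; split.
  move/forallPn => [i]; rewrite implyTb -lt0n => H; by exists i.
move=> [i Hi]; apply/forallPn; exists i; by rewrite implyTb -lt0n.
Qed.

Lemma relevant_diag (M : monoidal_monad) (HR : relevant M) A (q : T M A) :
  psi q q = fmap (fun a => (a, a)) q.
Proof.
have := HR A A (fmap (fun a => (a, a)) q).
by rewrite -!fmap_comp !fmap_id.
Qed.

Lemma bind_dup (M : monoidal_monad) (HR : relevant M) A B (q : T M A) (f : A -> A -> T M B) :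
  bind q (fun a => bind q (fun b => f a b)) = bind q (fun a => f a a).
Proof.
rewrite -(bind_psi q q (fun p => f p.1 p.2)) relevant_diag // fmap_bindE bind_assoc.
by apply: bind_ext => a; rewrite bind_retl.
Qed.

Definition upd (V : eqType) B (rho : V -> B) (w : V) (b : B) : V -> B :=
  fun v => if v == w then b else rho v.

Lemma eval_ext (S : signature) (V : eqType) A (alg : algebra S A) (rho1 rho2 : V -> A) (s : term S V) :
  (forall v, 0 < occ v s -> rho1 v = rho2 v) -> eval alg rho1 s = eval alg rho2 s.
Proof.
elim: s => [v|o a IH] H /=.
  by apply: H; rewrite /= eqxx.
congr (alg o); apply: functional_extensionality => i; apply: IH => v Hv.
apply: H => /=; apply/sum_pos; by exists i.
Qed.

Lemma eval_rename (S : signature) (V W : Type) A (alg : algebra S A) (rho : W -> A) (f : V -> W) (s : term S V) :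
  eval alg rho (rename f s) = eval alg (fun v => rho (f v)) s.
Proof.
elim: s => [v|o a IH] //=.
by congr (alg o); apply: functional_extensionality => i.
Qed.

Notation evl alg rho s := (eval (lift_alg alg) rho s).

Lemma lin0 (M : monoidal_monad) (S : signature) (V : eqType) A (alg : algebra S A)
  (rho : V -> T M A) (c : V -> A) (s : term S V) :
  (forall v, 0 < occ v s -> rho v = ret (c v)) -> evl alg rho s = ret (eval alg c s).
Proof.
elim: s => [v|o a IH] H /=.
  by apply: H; rewrite /= eqxx.
rewrite /lift_alg.
have -> : (fun i => evl alg rho (a i)) = (fun i => ret (eval alg c (a i))).
  apply: functional_extensionality => i; apply: IH => v Hv.
  apply: H => /=; apply/sum_pos; by exists i.
by rewrite psin_ret ret_nat.
Qed.

Lemma pull (M : monoidal_monad) (S : signature) (V : eqType) A (alg : algebra S A)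
  (rho : V -> T M A) (w : V) (s : term S V) :
  occ w s = 1 -> evl alg rho s = bind (rho w) (fun b => evl alg (upd rho w (ret b)) s).
Proof.
elim: s rho => [v|o a IH] rho /=.
  case: eqP => // -> _; rewrite /upd eqxx; by rewrite bind_retr.
move/eqP/sum_nat_eq1 => [j [_ Hj Hoth]].
rewrite /lift_alg (psin_pull _ j) (IH j _ Hj) bind_assoc fmap_bindE bind_assoc.
apply: bind_ext => b.
rewrite (psin_pull (fun i => evl alg (upd rho w (ret b)) (a i)) j) ?fmap_bindE !bind_assoc.
apply: bind_ext => z; congr (bind (psin _) _).
apply: functional_extensionality => i; rewrite /updF; case: eqP => // /eqP Hij.
apply: eval_ext => v Hv; rewrite /upd; case: eqP => // Evw.
by move: Hv; rewrite Evw (Hoth i Hij).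
Qed.


Lemma psin_common (M : monoidal_monad) (HR : relevant M) X B n (m : T M B)
  (G : B -> 'I_n -> T M X) (F : 'I_n -> T M X) (U : 'I_n -> bool) :
  (forall i, U i -> F i = bind m (fun b => G b i)) ->
  (forall i, ~~ U i -> forall b, G b i = F i) ->
  (exists i, U i) -> psin F = bind m (fun b => psin (G b)).
Proof.
elim: n F G U => [|n IH] F G U HU HnU [i0 Hi0]; first by case: i0 Hi0.
transitivity (bind m (fun b => bind (G b ord0) (fun a =>
   bind (psin (fun i => G b (lift ord0 i))) (fun f => ret (cons_fun a f))))); last first.
  by apply: bind_ext => b; rewrite psinS.
rewrite psinS.
case: (classic (exists i, U (lift ord0 i))) => [Hex|Hnex].
- rewrite (IH _ (fun b i => G b (lift ord0 i)) (fun i => U (lift ord0 i))) //; last first.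
    by move=> i /HnU.
    by move=> i /HU.
  case HU0: (U ord0).
  + rewrite (HU _ HU0) bind_assoc.
    transitivity (bind m (fun b => bind m (fun b' => bind (G b ord0) (fun a =>
       bind (psin (fun i => G b' (lift ord0 i))) (fun f => ret (cons_fun a f)))))).
      apply: bind_ext => b.
      transitivity (bind (G b ord0) (fun a => bind m (fun b' =>
         bind (psin (fun i => G b' (lift ord0 i))) (fun f => ret (cons_fun a f))))).
        by apply: bind_ext => a; rewrite bind_assoc.
      by rewrite bind_comm.
    by rewrite (bind_dup HR).
  + have H0 : forall b, G b ord0 = F ord0 by apply: HnU; rewrite HU0.
    transitivity (bind (F ord0) (fun a => bind m (fun b =>
       bind (psin (fun i => G b (lift ord0 i))) (fun f => ret (cons_fun a f))))).
      by apply: bind_ext => a; rewrite bind_assoc.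
    rewrite bind_comm; apply: bind_ext => b; by rewrite H0.
- have HU0 : U ord0.
    move: Hi0; case: (unliftP ord0 i0) => [j ->|->] // Hj.
    by case: Hnex; exists j.
  have Hr : forall b, (fun i => G b (lift ord0 i)) = (fun i => F (lift ord0 i)).
    move=> b; apply: functional_extensionality => i; apply: HnU.
    by apply/negP => H; apply: Hnex; exists i.
  rewrite (HU _ HU0) bind_assoc; apply: bind_ext => b; by rewrite Hr.
Qed.

Lemma pullR (M : monoidal_monad) (HR : relevant M) (S : signature) (V : eqType) A (alg : algebra S A)
  (rho : V -> T M A) (w : V) (s : term S V) :
  0 < occ w s -> evl alg rho s = bind (rho w) (fun b => evl alg (upd rho w (ret b)) s).
Proof.
elim: s rho => [v|o a IH] rho /=.
  case: eqP => // -> _; rewrite /upd eqxx; by rewrite bind_retr.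
move=> Hpos.
rewrite /lift_alg (@psin_common _ HR _ _ _ (rho w) (fun b i => evl alg (upd rho w (ret b)) (a i)) _
   (fun i => 0 < occ w (a i))).
- rewrite fmap_bindE bind_assoc; apply: bind_ext => b; by rewrite fmap_bindE.
- by move=> i Hi; apply: IH.
- move=> i; rewrite -eqn0Ngt => /eqP H0 b.
  apply: eval_ext => v Hv; rewrite /upd; case: eqP => // Evw.
  by move: Hv; rewrite Evw H0.
- by apply/sum_pos.
Qed.

Fixpoint pulls (M : monoidal_monad) A B (vs : seq nat) (rho : nat -> T M A)
  (k : (nat -> T M A) -> T M B) : T M B :=
  match vs with
  | [::] => k rho
  | v :: vs' => bind (rho v) (fun b => pulls vs' (upd rho v (ret b)) k)
  end.

Lemma pulls_eval (M : monoidal_monad) (HR : relevant M) (S : signature) A (alg : algebra S A)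
  (vs : seq nat) (rho : nat -> T M A) (t : term S nat) :
  (forall v, v \in vs -> 0 < occ v t) -> evl alg rho t = pulls vs rho (fun r => evl alg r t).
Proof.
elim: vs rho => [|v vs IH] rho H //=.
rewrite (pullR HR alg rho (w:=v)); last by apply: H; rewrite inE eqxx.
apply: bind_ext => b; apply: IH => u Hu; apply: H; by rewrite inE Hu orbT.
Qed.

Lemma pulls_ext (M : monoidal_monad) A B (vs W : seq nat) (rho : nat -> T M A)
  (k k' : (nat -> T M A) -> T M B) :
  (forall u, u \in W -> exists a, rho u = ret a) ->
  (forall r, (forall u, u \in vs ++ W -> exists a, r u = ret a) -> k r = k' r) ->
  pulls vs rho k = pulls vs rho k'.
Proof.
elim: vs W rho => [|v vs IH] W rho HW Hk /=; first by apply: Hk.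
apply: bind_ext => b; apply: (IH (v :: W)).
  move=> u; rewrite inE /upd; case: eqP => [_ _|_ /= Hu]; first by exists b.
  by apply: HW.
move=> r Hr; apply: Hk => u Hu; apply: Hr.
move: Hu; rewrite /= !mem_cat !inE !mem_cat; by case/orP => [->|/orP[->|->]]; rewrite ?orbT.
Qed.

Fixpoint vars (S : signature) (t : term S nat) : seq nat :=
  match t with
  | Var v => [:: v]
  | App o a => flatten [seq vars (a i) | i <- enum 'I_(ar o)]
  end.

Lemma mem_vars (S : signature) (t : term S nat) v : v \in vars t <-> 0 < occ v t.
Proof.
elim: t => [u|o a IH] /=.
  by rewrite inE lt0b eq_sym.
rewrite sum_pos; split.
  move/flattenP => [s /mapP [i _ ->] Hv]; exists i; by apply/IH.
move=> [i Hi]; apply/flattenP; exists (vars (a i)); last by apply/IH.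
by apply/mapP; exists i; rewrite ?mem_enum.
Qed.

Lemma rel_pres (S : signature) (l r : term S nat) (x : nat) (Hx : 0 < occ x l)
  (Hlr : forall v, 0 < occ v l <-> 0 < occ v r) (M : monoidal_monad) (HR : relevant M) :
  preserves M l r.
Proof.
move=> A alg Hsat rho.
rewrite (pulls_eval HR alg (vs := vars l) rho (t := l)); last by move=> v /mem_vars.
rewrite (pulls_eval HR alg (vs := vars l) rho (t := r)); last by move=> v /mem_vars /Hlr.
apply: (@pulls_ext _ _ _ (vars l) [::]) => // r' Hr'.
have [a0 Ha0] : exists a, r' x = ret a by apply: Hr'; rewrite cats0; apply/mem_vars.
pose c u := epsilon (inhabits a0) (fun a => r' u = ret a).
have Hc : forall u, 0 < occ u l -> r' u = ret (c u).
  move=> u Hu; apply: (epsilon_spec (inhabits a0) (fun a => r' u = ret a)); apply: Hr'; rewrite cats0; by apply/mem_vars.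
rewrite (@lin0 _ _ _ _ alg r' c l) // (@lin0 _ _ _ _ alg r' c r) ?Hsat //.
by move=> u /Hlr; apply: Hc.
Qed.


Fixpoint occursP (S : signature) (V : Type) (w : V) (t : term S V) : Prop :=
  match t with
  | Var v => v = w
  | App o a => exists i, occursP w (a i)
  end.

Lemma occP (S : signature) (V : eqType) (w : V) (t : term S V) : occursP w t <-> 0 < occ w t.
Proof.
elim: t => [v|o a IH] /=.
  by rewrite lt0b; split => [->|/eqP].
rewrite sum_pos; split => [[i /IH Hi]|[i /IH Hi]]; by exists i.
Qed.

Lemma subst_comp (S : signature) (U V W : Type) (s : V -> term S W) (s' : U -> term S V) t :
  subst s (subst s' t) = subst (fun v => subst s (s' v)) t.
Proof.
elim: t => [v|o a IH] //=; congr (App o); by apply: functional_extensionality.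
Qed.

Lemma subst_ext (S : signature) (V W : Type) (s1 s2 : V -> term S W) t :
  (forall v, s1 v = s2 v) -> subst s1 t = subst s2 t.
Proof. by move=> H; rewrite (functional_extensionality _ _ H). Qed.

Lemma subst_var (S : signature) (V : Type) (t : term S V) : subst (fun v => Var v) t = t.
Proof.
elim: t => [v|o a IH] //=; congr (App o); by apply: functional_extensionality.
Qed.

Lemma rename_subst (S : signature) (V W : Type) (f : V -> W) (t : term S V) :
  rename f t = subst (fun v => Var (f v)) t.
Proof.
elim: t => [v|o a IH] //=; congr (App o); by apply: functional_extensionality.
Qed.

Lemma occursP_subst (S : signature) (V W : Type) (s : V -> term S W) (t : term S V) w :
  occursP w (subst s t) <-> exists n, occursP n t /\ occursP w (s n).
Proof.
elim: t => [v|o a IH] /=.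
  by split => [H|[n [-> H]]] //; exists v.
split.
  move=> [i /IH [n [Hn Hw]]]; exists n; split => //; by exists i.
move=> [n [[i Hi] Hw]]; exists i; apply/IH; by exists n.
Qed.

Lemma derives_gen (S : signature) (l r : term S nat) (W : Type) (u v : term S W) :
  derives l r u v -> forall W' (s : W -> term S W'), derives l r (subst s u) (subst s v).
Proof.
elim => {u v}.
- move=> s0 W' s; rewrite !subst_comp; exact: der_ax.
- move=> u W' s; exact: der_refl.
- move=> u v _ IH W' s; apply: der_sym; exact: IH.
- move=> u v w _ IH1 _ IH2 W' s; apply: der_trans (IH1 W' s) (IH2 W' s).
- move=> o a b _ IH W' s /=; apply: der_cong => i; exact: IH.
- move=> s' u v _ IH W' s; rewrite !subst_comp; exact: IH.
Qed.

Lemma derives_occ (S : signature) (l r : term S nat) (Hlr : forall n, occursP n l <-> occursP n r)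
  (W : Type) (u v : term S W) :
  derives l r u v -> forall w, occursP w u <-> occursP w v.
Proof.
elim => {u v}.
- move=> s w; rewrite !occursP_subst; split => [[n [/Hlr Hn H]]|[n [/Hlr Hn H]]]; by exists n.
- by [].
- move=> u v _ IH w; by rewrite IH.
- move=> u v w _ IH1 _ IH2 z; by rewrite IH1 IH2.
- move=> o a b _ IH w /=; split => [[i /IH Hi]|[i /IH Hi]]; by exists i.
- move=> s u v _ IH w; rewrite !occursP_subst.
  split => [[n [/IH Hn H]]|[n [/IH Hn H]]]; by exists n.
Qed.

Lemma subst_derives (S : signature) (l r : term S nat) (V W : Type) (s1 s2 : V -> term S W) t :
  (forall n, derives l r (s1 n) (s2 n)) -> derives l r (subst s1 t) (subst s2 t).
Proof.
move=> H; elim: t => [v|o a IH] //=; by apply: der_cong.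
Qed.

Definition Qt (S : signature) (l r : term S nat) (W : Type) :=
  {P : term S W -> Prop | exists u, P = derives l r u}.

Arguments Qt {S} l r W.
Definition mk (S : signature) (l r : term S nat) (W : Type) (u : term S W) : Qt l r W :=
  exist _ (derives l r u) (ex_intro _ u erefl).

Arguments mk {S} l r {W} u.
Definition rep (S : signature) (l r : term S nat) (W : Type) (c : Qt l r W) : term S W :=
  proj1_sig (constructive_indefinite_description _ (proj2_sig c)).

Lemma mk_eq (S : signature) (l r : term S nat) (W : Type) (u v : term S W) :
  mk l r u = mk l r v <-> derives l r u v.
Proof.
split.
  move=> /(f_equal (@proj1_sig _ _)) /= E.
  have : derives l r v v by apply: der_refl.
  by rewrite -E.
move=> H; rewrite /mk.
have E : derives l r u = derives l r v.
  apply: functional_extensionality => w; apply: propositional_extensionality.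
  split => H'; [apply: der_trans (der_sym H) H' | apply: der_trans H H'].
move: (ex_intro _ u _) (ex_intro _ v _); rewrite E => p1 p2.
by rewrite (proof_irrelevance _ p1 p2).
Qed.

Lemma mk_rep (S : signature) (l r : term S nat) (W : Type) (c : Qt l r W) : mk l r (rep c) = c.
Proof.
case: c => P HP; rewrite /rep /=.
case: (constructive_indefinite_description _ _) => u Hu /=.
subst P; rewrite /mk; congr exist; apply: proof_irrelevance.
Qed.

Lemma rep_mk (S : signature) (l r : term S nat) (W : Type) (u : term S W) :
  derives l r (rep (mk l r u)) u.
Proof. by apply/mk_eq; rewrite mk_rep. Qed.

Definition qalg (S : signature) (l r : term S nat) (W : Type) : algebra S (Qt l r W) :=
  fun o f => mk l r (App o (fun i => rep (f i))).

Arguments qalg {S} l r W.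
Lemma eval_quot (S : signature) (l r : term S nat) (W : Type) (c : nat -> Qt l r W) (t : term S nat) :
  eval (qalg l r W) c t = mk l r (subst (fun n => rep (c n)) t).
Proof.
elim: t => [v|o a IH] /=; first by rewrite mk_rep.
rewrite /qalg; apply/mk_eq; apply: der_cong => i; rewrite IH; exact: rep_mk.
Qed.

Lemma eval_quot' (S : signature) (l r : term S nat) (W : Type) (V : Type) (c : V -> Qt l r W) (t : term S V) :
  eval (qalg l r W) c t = mk l r (subst (fun n => rep (c n)) t).
Proof.
elim: t => [v|o a IH] /=; first by rewrite mk_rep.
rewrite /qalg; apply/mk_eq; apply: der_cong => i; rewrite IH; exact: rep_mk.
Qed.

Lemma qsat (S : signature) (l r : term S nat) (W : Type) : satisfies (qalg l r W) l r.
Proof. move=> c; rewrite !eval_quot; apply/mk_eq; exact: der_ax. Qed.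

Lemma fmap_inj (M : monoidal_monad) X Y (h : X -> Y) (Hh : injective h) (m1 m2 : T M X) :
  fmap h m1 = fmap h m2 -> m1 = m2.
Proof.
pose g (y : Y) : T M X :=
  match excluded_middle_informative (exists a, h a = y) with
  | left H => ret (proj1_sig (constructive_indefinite_description _ H))
  | right _ => m1 end.
have Hg : forall a, g (h a) = ret a.
  move=> a; rewrite /g; case: excluded_middle_informative => [H|H].
    by case: (constructive_indefinite_description _ _) => a' /= /Hh ->.
  by case: H; exists a.
have K : forall m, bind (fmap h m) g = m.
  move=> m; rewrite fmap_bindE bind_assoc.
  transitivity (bind m (fun a => ret a)); last exact: bind_retr.
  by apply: bind_ext => a; rewrite bind_retl Hg.
by move=> E; rewrite -(K m1) E K.
Qed.


Lemma occ_renameSome (S : signature) (t : term S nat) (v : nat) :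
  occ (Some v) (rename Some t) = occ v t.
Proof. elim: t => [u|o a IH] //=; by apply: eq_bigr => i _. Qed.

Lemma occ_renameNone (S : signature) (t : term S nat) : occ None (rename Some t) = 0.
Proof. elim: t => [u|o a IH] //=; by rewrite big1. Qed.

Lemma rename_odflt_Some (S : signature) x (t : term S nat) : rename (odflt x) (rename Some t) = t.
Proof. elim: t => [u|o a IH] //=; congr (App o); by apply: functional_extensionality. Qed.

Lemma split_occ (S : signature) (x : nat) (t : term S nat) : 0 < occ x t ->
  exists s : term S (option nat),
    [/\ rename (odflt x) s = t, occ None s = 1 & occ (Some x) s = (occ x t).-1].
Proof.
elim: t => [u|o a IH] /=.
  case: eqP => // -> _; by exists (Var None).
move=> /sum_pos [j Hj].
have [sj [E1 E2 E3]] := IH j Hj.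
pose a' i := if i == j then sj else rename Some (a i).
exists (App o a'); split => /=.
- congr (App o); apply: functional_extensionality => i; rewrite /a'.
  case: eqP => [->|_] //; exact: rename_odflt_Some.
- rewrite (bigD1 j) //= {1}/a' eqxx E2 big1 // => i /negbTE Hi.
  by rewrite /a' Hi occ_renameNone.
- rewrite (bigD1 j) //= {1}/a' eqxx E3 [in RHS](bigD1 j) //=.
  rewrite (eq_bigr (fun i => occ x (a i))); last by move=> i /negbTE Hi; rewrite /a' Hi occ_renameSome.
  by case: (occ x (a j)) Hj.
Qed.


Lemma pres_rel (S : signature) (l r : term S nat) (x : nat) (HD : two_discerning l r x)
  (M : monoidal_monad) (HP : preserves M l r) : relevant M.
Proof.
case: HD => Hl Hr Hoth Hnd.
have Hr0 : 0 < occ x r by rewrite Hr.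
have [s2 [Hs2 HN HSx]] := @split_occ S x r Hr0.
rewrite Hr /= in HSx.
have Hnd2 := Hnd s2 Hs2 HN.
have Hlr : forall n, occursP n l <-> occursP n r.
  move=> n; rewrite !occP; case: (eqVneq n x) => [->|/eqP Hn]; first by rewrite Hl Hr.
  by rewrite (Hoth n Hn).1.
suff Hdiag : forall X (q : T M X), psi q q = fmap (fun a => (a, a)) q.
  move=> A B p; rewrite psi_nat Hdiag -fmap_comp.
  transitivity (fmap id p); last exact: fmap_id.
  by congr (fmap _ p); apply: functional_extensionality => -[a b].
move=> X q.
pose W := (nat + X)%type.
pose e (y : X) : Qt l r W := mk l r (Var (inr y)).
pose rho (v : nat) : T M (Qt l r W) := if v == x then fmap e q else ret (mk l r (Var (inl v))).
pose ca (a : Qt l r W) (v : nat) := if v == x then a else mk l r (Var (inl v)).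
pose cb (a b : Qt l r W) (o : option nat) := match o with None => b | Some v => ca a v end.
have E := HP _ (qalg l r W) (@qsat S l r W) rho.
have EL : evl (qalg l r W) rho l = bind (fmap e q) (fun a => ret (eval (qalg l r W) (ca a) l)).
  rewrite (pull _ _ (w:=x)) //; have -> : rho x = fmap e q by rewrite /rho eqxx.
  apply: bind_ext => a; apply: lin0 => v _; rewrite /upd /ca /rho; by case: (v == x).
have ER : evl (qalg l r W) rho r = bind (fmap e q) (fun a => bind (fmap e q)
             (fun b => ret (eval (qalg l r W) (cb a b) s2))).
  have -> : evl (qalg l r W) rho r = evl (qalg l r W) rho (rename (odflt x) s2) by rewrite Hs2.
  rewrite eval_rename (pull _ _ (w := Some x)) //.
  have -> : rho (odflt x (Some x)) = fmap e q by rewrite /rho eqxx.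
  apply: bind_ext => a; rewrite (pull _ _ (w := None)) //.
  have -> : upd (fun v => rho (odflt x v)) (Some x) (ret a) None = fmap e q by rewrite /upd /rho eqxx.
  apply: bind_ext => b; apply: lin0 => o _; rewrite /upd /cb /ca /rho.
  case: o => [v|] //=; rewrite (_ : (Some v == Some x) = (v == x)) //; by case: (v == x).
pose h (p : X * X) := eval (qalg l r W) (cb (e p.1) (e p.2)) s2.
have Hh : injective h.
  move=> [y z] [y' z'] /=; rewrite /h !eval_quot' => /mk_eq D.
  pose sg (y z : X) (o : option nat) : term S W :=
    match o with None => Var (inr z) | Some v => if v == x then Var (inr y) else Var (inl v) end.
  have Hsg : forall a b, derives l r (subst (fun o => rep (cb (e a) (e b) o)) s2) (subst (sg a b) s2).
    move=> a b; apply: subst_derives => -[v|] /=; rewrite /ca; try case: (v == x); exact: rep_mk.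
  have D' : derives l r (subst (sg y z) s2) (subst (sg y' z') s2).
    exact: der_trans (der_sym (Hsg y z)) (der_trans D (Hsg y' z')).
  have Hoc : forall a b c, occursP (inr c : W) (subst (sg a b) s2) <-> c = a \/ c = b.
    move=> a b c; rewrite occursP_subst; split.
      move=> [[v|] [_ H]]; move: H => /=; last by move=> [->]; right.
      by case: (v == x) => //= [[->]]; left.
    move=> [->|->]; [exists (Some x) | exists None]; split => //=.
    - by apply/occP; rewrite HSx.
    - by rewrite eqxx.
    - by apply/occP; rewrite HN.
  have key := derives_occ Hlr D'.
  have Hy : y = y' \/ y = z' by apply/Hoc; apply/key; apply/Hoc; left.
  have Hz : z = y' \/ z = z' by apply/Hoc; apply/key; apply/Hoc; right.
  have Hy' : y' = y \/ y' = z by apply/Hoc; apply/key; apply/Hoc; left.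
  have Hz' : z' = y \/ z' = z by apply/Hoc; apply/key; apply/Hoc; right.
  case: (classic (y = y' /\ z = z')) => [[-> ->] //|Hne].
  have Hyy : y <> y'.
    move=> E0; apply: Hne; split => //; case: Hz => Ez0; last by [].
    by case: Hz' => Ez1; [rewrite Ez0 Ez1 E0 | rewrite Ez1].
  have Ez : z' = y by case: Hy => [/Hyy //|->].
  have Ey : y' = z by case: Hy' => [/esym /Hyy //|->].
  have Hyz : y <> z by move=> Eyz; apply: Hyy; rewrite Ey Eyz.
  subst y' z'; exfalso; apply: Hnd2.
  pose tau (w : W) : term S (option nat) :=
    match w with
    | inl v => Var (Some v)
    | inr c => if excluded_middle_informative (c = y) then Var (Some x) else Var None end.
  have := derives_gen D' tau; rewrite !subst_comp.
  have -> : subst (fun o => subst tau (sg y z o)) s2 = s2.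
    rewrite -[RHS]subst_var; apply: subst_ext => -[v|] /=.
      case: eqP => [->|_] //=; by case: excluded_middle_informative.
    by case: excluded_middle_informative => [E0|] //; exfalso; exact: Hyz (esym E0).
  have -> : subst (fun o => subst tau (sg z y o)) s2 = rename (swap_fresh x) s2.
    rewrite rename_subst; apply: subst_ext => -[v|] /=.
      case: (v == x) => //=; by case: excluded_middle_informative => [E0|] //; exfalso; exact: Hyz (esym E0).
    by case: excluded_middle_informative.
  by [].
apply: (fmap_inj Hh).
transitivity (bind q (fun y => bind q (fun z => ret (h (y, z))))).
  by rewrite fmap_bindE bind_psi.
transitivity (bind q (fun y => ret (h (y, y)))); last by rewrite -fmap_comp fmap_bindE.
have EL' : bind (fmap e q) (fun a => ret (eval (qalg l r W) (ca a) l)) = bind q (fun y => ret (h (y,y))).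
  rewrite fmap_bindE bind_assoc; apply: bind_ext => y; rewrite bind_retl; congr ret.
  rewrite (@qsat S l r W (ca (e y))).
  have -> : eval (qalg l r W) (ca (e y)) r = eval (qalg l r W) (ca (e y)) (rename (odflt x) s2) by rewrite Hs2.
  rewrite eval_rename /h; congr (eval _ _ s2).
  by apply: functional_extensionality => -[v|] //=; rewrite /ca eqxx.
have ER' : bind (fmap e q) (fun a => bind (fmap e q) (fun b => ret (eval (qalg l r W) (cb a b) s2)))
           = bind q (fun y => bind q (fun z => ret (h (y,z)))).
  rewrite fmap_bindE bind_assoc; apply: bind_ext => y; rewrite bind_retl bind_assoc.
  by apply: bind_ext => z; rewrite bind_retl.
by rewrite -ER' -EL' -ER -EL E.
Qed.

Theorem theorem5 (S : signature) (t1 t2 : term S nat) (x : nat)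
  (Hdisc : two_discerning t1 t2 x \/ two_discerning t2 t1 x)
  (M : monoidal_monad) :
  relevant M <-> preserves M t1 t2.
Proof.
have Hcore : forall l r : term S nat, two_discerning l r x -> (relevant M <-> preserves M l r).
  move=> l r HD; split; last by move=> HP; exact (@pres_rel _ _ _ _ HD _ HP).
  case: HD => Hl Hr Hoth _ HR.
  apply: (rel_pres (x:=x)) => //; first by rewrite Hl.
  move=> v; case: (eqVneq v x) => [->|/eqP Hv]; first by rewrite Hl Hr.
  by rewrite (Hoth v Hv).1.
have Hsym : forall l r : term S nat, preserves M l r -> preserves M r l.
  move=> l r H A alg Hs rho; symmetry; apply: H => // c; by rewrite Hs.
case: Hdisc => HD; first exact: Hcore.
rewrite (Hcore _ _ HD); split; exact: Hsym.
Qed.
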